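(* Let $G=\mathbb Z$ with the discrete topology, $Y=(0,\infty)$, and $\theta$ the partial action with $Y_n=(\max\{0,n\},\infty)$ and $\theta_n(y)=n+y$ for $y\in Y_{-n}$. Let $X$ be a compact space and $\hat\theta$ the induced partial action on $C(X,Y)$, i.e. $C(X,Y)_n=\{f: f(x)>\max\{0,n\}\text{ for all }x\in X\}$ and $\hat\theta_n(f)=\theta_n\circ f=f+n$. Then the enveloping space $C(X,Y)_G$ of $\hat\theta$ is $G$-homeomorphic to $C(X,\mathbb R)$ (compact-open topology) with the global action $(n,F)\mapsto F+n$.
   Context: $C(X,Y)$ has the compact-open topology. The enveloping space is $C(X,Y)_G=(G\times C(X,Y))/R$ with the quotient topology, where $(n,f)R(m,g)$ iff $f\in C(X,Y)_{m-n}$ and $\hat\theta_{n-m}(f)=g$, with global action $k\cdot[n,f]=[k+n,f]$. A $G$-homeomorphism is a homeomorphism commuting with the actions. *)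

(* Defs.v *)
From HB Require Import structures.
From mathcomp Require Import all_boot all_order all_algebra generic_quotient.
From mathcomp Require Import all_classical all_reals topology subtype_topology function_spaces normedtype.
From mathcomp Require Import lra.
Set Implicit Arguments. Unset Strict Implicit. Unset Printing Implicit Defensive.
Import Order.TTheory GRing.Theory Num.Theory.
Import numFieldNormedType.Exports.
Local Open Scope classical_set_scope.
Local Open Scope ring_scope.
Local Open Scope quotient_scope.

Notation Ypos R := (set_type [set y : R | (0 < y)%R]) (only parsing).

Definition CXY (X : topologicalType) (R : realType) :=
  initial_topology
    (fun f : continuousType X (Ypos R) => (f : X -> Ypos R) : {compact-open, X -> Ypos R}).
Definition CXR (X : topologicalType) (R : realType) :=
  initial_topology
    (fun f : continuousType X R => (f : X -> R) : {compact-open, X -> R}).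

Definition Zd := discrete_topology int.

Definition cval (X : topologicalType) (R : realType) (f : CXY X R) (x : X) : R :=
  \val ((f : X -> Ypos R) x).

Definition CXY_dom (X : topologicalType) (R : realType) (n : int) (f : CXY X R) : Prop :=
  forall x, Num.max 0 (n%:~R : R) < cval f x.

Definition hat_theta_rel (X : topologicalType) (R : realType) (n : int)
  (f g : CXY X R) : Prop :=
  CXY_dom (- n) f /\ forall x, cval g x = n%:~R + cval f x.

Definition envR (X : topologicalType) (R : realType) (p q : Zd * CXY X R) : Prop :=
  hat_theta_rel (p.1 - q.1) p.2 q.2.

Definition envRb (X : topologicalType) (R : realType) : rel (Zd * CXY X R) :=
  fun p q => `[< envR p q >].

Lemma envR_sym_subproof X R (p q : Zd * CXY X R) : envR p q -> envR q p.
Proof.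
case: p q => [n f] [m g]; rewrite /envR /hat_theta_rel /CXY_dom /= => -[Hd He].
have E : forall x, cval f x = (m - n)%:~R + cval g x.
  by move=> x; rewrite He addrA -rmorphD /= addrC subrKA; lra.
split=> x; last exact: E.
have := Hd x; rewrite He !opprB !rmorphB /=.
move: (cval f x) => a.
rewrite /Num.max; (do 2 case: ifP) => /=; lra.
Qed.

Lemma envR_trans_subproof X R (p q r : Zd * CXY X R) :
  envR p q -> envR q r -> envR p r.
Proof.
case: p q r => [n f] [m g] [k h]; rewrite /envR /hat_theta_rel /CXY_dom /=.
move=> [Hd He] [Hd' He']; split=> x; last first.
  by rewrite He' He !rmorphB /=; lra.
have := Hd x; have := Hd' x; rewrite He /= !opprB !rmorphB /=.
move: (cval f x) => a.
rewrite /Num.max; (do 3 case: ifP) => /=; try lra.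
Qed.

Lemma envRb_refl X R : reflexive (@envRb X R).
Proof.
move=> [n f]; apply/asboolP; rewrite /envR /hat_theta_rel /CXY_dom /=.
rewrite subrr oppr0 /=; split=> x; last by rewrite add0r.
by rewrite maxxx /cval; have := set_valP ((f : X -> Ypos R) x).
Qed.

Lemma envRb_sym X R : symmetric (@envRb X R).
Proof.
by move=> p q; apply/asboolP/asboolP; apply: envR_sym_subproof.
Qed.

Lemma envRb_trans X R : transitive (@envRb X R).
Proof.
move=> q p r /asboolP Hpq /asboolP Hqr; apply/asboolP.
exact: envR_trans_subproof Hpq Hqr.
Qed.

Canonical envR_equiv (X : topologicalType) (R : realType) :=
  EquivRel (@envRb X R) (@envRb_refl X R) (@envRb_sym X R) (@envRb_trans X R).

Definition Env (X : topologicalType) (R : realType) :=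
  quotient_topology {eq_quot (@envR_equiv X R)}.

Definition env_act (X : topologicalType) (R : realType) (k : int) (q : Env X R) : Env X R :=
  \pi_(Env X R) ((k + (repr q).1 : Zd), (repr q).2).

(* Main.v *)
Require Import Defs.
From HB Require Import structures.
From mathcomp Require Import all_boot all_order all_algebra generic_quotient.
From mathcomp Require Import all_classical all_reals topology subtype_topology function_spaces normedtype.
From mathcomp Require Import lra.
Import Order.TTheory GRing.Theory Num.Theory.
Import numFieldNormedType.Exports.
Local Open Scope classical_set_scope.
Local Open Scope ring_scope.

Lemma post_cts (X A B : topologicalType) (phi : A -> B) : continuous phi ->
  continuous (fun f : {compact-open, X -> A} => (phi \o f : {compact-open, X -> B})).
Proof.
move=> cphi f; apply/compact_open_cvgP.
  apply: fmap_filter; exact: (@nbhs_filter {compact-open, X -> A}).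
move=> K O cK oO fKO.
rewrite /=.
have oP : open (phi @^-1` O) by move/continuousP: cphi; apply.
have := @compact_open_open X A K (phi @^-1` O) cK oP.
move=> oW; apply: (@filterS _ _ _ [set g : {compact-open, X -> A} | g @` K `<=` phi @^-1` O]).
  by move=> g gK _ [x Kx <-]; apply: (gK (g x)); exists x.
apply: open_nbhs_nbhs; split => //.
by move=> _ [x Kx <-]; apply: fKO; exists x.
Qed.

Section S.
Variables (R : realType) (X : topologicalType).

Lemma val_cts : continuous (set_val : Ypos R -> R).
Proof. exact: initial_continuous. Qed.

Lemma cval_cts (f : CXY X R) : continuous (cval f).
Proof.
move=> x; apply: continuous_comp; last exact: val_cts.
exact: (@cts_fun _ _ (f : continuousType X (Ypos R))).
Qed.

Lemma cval_gt0 (f : CXY X R) x : 0 < cval f x.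
Proof. by rewrite /cval; have := set_valP ((f : X -> Ypos R) x). Qed.

Definition csum (p : Zd * CXY X R) : X -> R := fun x => p.1%:~R + cval p.2 x.

Lemma csum_cts p : continuous (csum p).
Proof.
move=> x; apply: cvgD; first exact: cvg_cst. exact: cval_cts.
Qed.

Definition hmap (p : Zd * CXY X R) : CXR X R := (mkcts (@csum_cts p) : continuousType X R).

Lemma envRE (p q : Zd * CXY X R) : envR p q <-> csum p =1 csum q.
Proof.
case: p q => [n f] [m g]; rewrite /envR /hat_theta_rel /CXY_dom /csum /=.
split.
  case=> _ He x; rewrite He addrA -rmorphD /=; congr (_ + _); congr (_%:~R).
  by rewrite addrCA subrr addr0.
move=> E; split => x; last first.
  have := E x; rewrite rmorphB /=; lra.
have := E x; have := cval_gt0 f x; have := cval_gt0 g x.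
rewrite opprB rmorphB /=.
move: (cval f x) (cval g x) => a b.
rewrite /Num.max; case: ifP => /=; lra.
Qed.

Local Open Scope quotient_scope.

Lemma piP (p q : Zd * CXY X R) :
  \pi_(Env X R) p = \pi_(Env X R) q <-> csum p =1 csum q.
Proof.
rewrite -envRE; split.
  by move/eqmodP => /asboolP.
by move=> H; apply/eqmodP; apply/asboolP.
Qed.

Lemma csum_repr (p : Zd * CXY X R) : csum (repr (\pi_(Env X R) p)) =1 csum p.
Proof. by apply/piP; rewrite reprK. Qed.

Definition hh (q : Env X R) : CXR X R := hmap (repr q).

Lemma hh_pi p : hh (\pi_(Env X R) p) = hmap p.
Proof. apply/continuousEP => x; exact: csum_repr. Qed.


Lemma near_fst (n0 : Zd) (f0 : CXY X R) :
  \forall p \near ((n0, f0) : Zd * CXY X R), p.1 = n0.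
Proof.
exists ([set n0], setT); first by split; [exact: discrete_set1 | exact: filterT].
by move=> [a b] [/= -> _].
Qed.

Lemma incl_cts : continuous (fun f : CXY X R => (f : X -> Ypos R) : {compact-open, X -> Ypos R}).
Proof. exact: initial_continuous. Qed.

Lemma hmap_cts : continuous (hmap).
Proof.
apply: (@continuous_comp_initial _ _ _
  (fun f : continuousType X R => (f : X -> R) : {compact-open, X -> R})).
move=> [n0 f0].
pose K := fun p : Zd * CXY X R =>
  ((fun y : Ypos R => n0%:~R + set_val y) \o (p.2 : X -> Ypos R) : {compact-open, X -> R}).
have cphi : continuous (fun y : Ypos R => n0%:~R + set_val y).
  move=> y; apply: (@continuous_comp _ _ _ set_val (fun t : R => n0%:~R + t)); first exact: val_cts.
  by apply: cvgD; [exact: cvg_cst | exact: cvg_id].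
have cL : continuous (fun f : CXY X R =>
   ((fun y : Ypos R => n0%:~R + set_val y) \o (f : X -> Ypos R) : {compact-open, X -> R})).
  move=> f.
  exact: (@continuous_comp _ _ _ (fun f : CXY X R => (f : X -> Ypos R) : {compact-open, X -> Ypos R})
     (fun g : {compact-open, X -> Ypos R} => ((fun y : Ypos R => n0%:~R + set_val y) \o g : {compact-open, X -> R}))
     f (incl_cts f) (@post_cts X _ _ _ cphi _)).
have cK : K @ nbhs ((n0, f0) : Zd * CXY X R) --> K (n0, f0).
  exact: (cvg_comp _ _ (@cvg_snd _ _ (nbhs n0) (nbhs f0) _) (cL f0)).
apply: cvg_trans (near_eq_cvg _) cK.
near=> p; have E := near (near_fst n0 f0) p.
apply: funext => x.
change (n0%:~R + set_val ((p.2 : X -> Ypos R) x) = p.1%:~R + cval p.2 x).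
by rewrite E.
Unshelve. all: by end_near.
Qed.

Lemma chi_pos (n : int) (t : R) : [set y : R | 0 < y] (Num.max (t - n%:~R) (1/2)).
Proof. rewrite /=; have : (0:R) < 1/2 by lra. move=> h; rewrite /Num.max; case: ifP => //; lra. Qed.

Definition chi (n : int) (t : R) : Ypos R := SigSub (mem_set (chi_pos n t)).

Lemma chi_cts n : continuous (chi n).
Proof.
apply: (@continuous_comp_initial _ _ _ (set_val : Ypos R -> R)).
have -> : (set_val : Ypos R -> R) \o chi n = (fun t => t - n%:~R) \max (cst (1/2)).
  by apply: funext.
apply: max_fun_continuous; last exact: cst_continuous.
move=> t; apply: cvgB; [exact: cvg_id | exact: cvg_cst].
Qed.

Lemma chiF_cts n (F : CXR X R) : continuous (chi n \o (F : X -> R)).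
Proof.
move=> x; apply: continuous_comp; last exact: chi_cts.
exact: (@cts_fun _ _ (F : continuousType X R)).
Qed.

Definition psi n (F : CXR X R) : CXY X R :=
  (mkcts (@chiF_cts n F) : continuousType X (Ypos R)).

Lemma inclR_cts : continuous (fun f : CXR X R => (f : X -> R) : {compact-open, X -> R}).
Proof. exact: initial_continuous. Qed.

Lemma psi_cts n : continuous (psi n).
Proof.
apply: (@continuous_comp_initial _ _ _
  (fun f : continuousType X (Ypos R) => (f : X -> Ypos R) : {compact-open, X -> Ypos R})).
move=> F.
exact: (@continuous_comp _ _ _ (fun f : CXR X R => (f : X -> R) : {compact-open, X -> R})
     (fun g : {compact-open, X -> R} => (chi n \o g : {compact-open, X -> Ypos R}))
     F (inclR_cts F) (@post_cts X _ _ _ (chi_cts n) _)).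
Qed.

Lemma csum_psi n (F : CXR X R) x : n%:~R + 1/2 <= (F : X -> R) x ->
  csum (n : Zd, psi n F) x = (F : X -> R) x.
Proof.
move=> H; rewrite /csum /cval /=.
change (n%:~R + Num.max ((F : X -> R) x - n%:~R) (1/2) = (F : X -> R) x).
move: H; set a := (F : X -> R) x; rewrite /Num.max; case: ifP => h H; lra.
Qed.

Lemma exists_n (Xc : compact [set: X]) (F : CXR X R) :
  exists n : int, forall x, n%:~R + 1 < (F : X -> R) x.
Proof.
have cF : compact ((F : X -> R) @` setT).
  apply: continuous_compact => //; apply: continuous_subspaceT.
  exact: (@cts_fun _ _ (F : continuousType X R)).
have /pinfty_ex_gt0 [M M0 HM] := compact_bounded cF.
exists (- Num.ceil M - 2) => x.
have := HM ((F : X -> R) x) (ex_intro2 _ _ x I erefl).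
rewrite /= ler_norml => /andP [h1 _].
have := ceil_ge M; rewrite !rmorphB /= rmorphN /=. move: h1; set a := (F : X -> R) x. set c := (Num.ceil M)%:~R. move=> h1 h2. rewrite (_ : (2%:~R : R) = 2%:R) //. lra.
Qed.

Definition nF (F : CXR X R) : int :=
  xget 0 [set n : int | forall x, n%:~R + 1 < (F : X -> R) x].

Lemma nFP (Xc : compact [set: X]) F : forall x, (nF F)%:~R + 1 < (F : X -> R) x.
Proof. exact: (xgetPex 0 (exists_n Xc F)). Qed.

Definition gg (F : CXR X R) : Env X R := \pi_(Env X R) ((nF F : Zd), psi (nF F) F).

Lemma gg_eq (Xc : compact [set: X]) n (F : CXR X R) : (forall x, n%:~R + 1/2 <= (F : X -> R) x) ->
  gg F = \pi_(Env X R) ((n : Zd), psi n F).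
Proof.
move=> Hn; apply/piP => x; rewrite !csum_psi //.
have := nFP Xc F x; lra.
Qed.
End S.
Arguments nF {R X}.
Arguments nFP {R X}.
Arguments gg_eq {R X}.
Arguments hh_pi {R X}.
Arguments hmap_cts {R X}.
Arguments inclR_cts {R X}.
Arguments psi_cts {R X}.
Arguments csum_psi {R X}.
Arguments piP {R X}.
Arguments psi {R X}.
Arguments csum {R X}.
Arguments hh {R X}.
Arguments gg {R X}.
Arguments hmap {R X}.

Local Close Scope quotient_scope.
Theorem theorem3p13 (R : realType) (X : topologicalType) (X_compact : compact [set: X]) :
  exists (h : Env X R -> CXR X R) (g : CXR X R -> Env X R),
    [/\ continuous h, continuous g, cancel h g, cancel g h &
      forall (k : int) (q : Env X R) (x : X),
        (h (env_act k q) : X -> R) x = k%:~R + (h q : X -> R) x].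
Proof.
exists (@hh R X), (@gg R X); split.
- apply/quotient_continuous.
  have -> : @hh R X \o (\pi_(Env X R))%qT = @hmap R X by apply: funext => p; exact: hh_pi.
  exact: hmap_cts.
- move=> F0; set n := nF F0.
  have Hn := nFP X_compact F0.
  pose W := [set G : {compact-open, X -> R} | G @` setT `<=` [set t | n%:~R + 1/2 < t]].
  have oW : open W by apply: compact_open_open => //; exact: open_gt.
  have nW : \forall G \near F0, forall x : X, n%:~R + 1/2 <= ((G : CXR X R) : X -> R) x.
    exists [set G : CXR X R | W (G : X -> R)]; split.
    - by exists W.
    - move=> _ [x _ <-] /=; have := Hn x; lra.
    - by move=> G GW x; apply/ltW; apply: GW; exists x.
  pose k := fun G : CXR X R => (\pi_(Env X R) ((n : Zd), psi n G))%qT.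
  have ck : k @ nbhs F0 --> k F0.
    have cp : (fun G : CXR X R => ((n : Zd), psi n G)) @ nbhs F0 --> ((n : Zd), psi n F0).
      exact: (cvg_pair (cvg_cst (n : Zd)) (psi_cts n F0)).
    have pc := @pi_continuous _ {eq_quot (@envR_equiv X R)}%qT.
    exact: (continuous_comp cp (pc _)).
  rewrite /continuous_at (@gg_eq R X X_compact n F0); last by move=> x; have := Hn x; lra.
  apply: cvg_trans (near_eq_cvg _) ck.
  near=> G; rewrite /k (@gg_eq R X X_compact n G) //; exact: (near nW G).
- move=> q; rewrite -[RHS]reprK; apply/piP => x.
  rewrite csum_psi; first by [].
  have := nFP X_compact (hh q) x; lra.
- move=> F; rewrite /gg hh_pi; apply/continuousEP => x.
  change (csum (nF F : Zd, psi (nF F) F) x = (F : X -> R) x).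
  rewrite csum_psi //; have := nFP X_compact F x; lra.
- move=> k q x; rewrite /env_act hh_pi.
  change ((k + (repr q).1)%:~R + cval (repr q).2 x = k%:~R + ((repr q).1%:~R + cval (repr q).2 x)).
  by rewrite rmorphD addrA.
Unshelve. all: by end_near.
Qed.
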